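(* Let $p\ge 5$ be a prime. Then $H^1(\mathrm{Alt}(5),X_{\{3\}})\cong C_3$ (here $p=5$), and $H^1(\mathrm{Alt}(p),D_{\{q\}})=0$ for all primes $q$ with $(p,q)\neq(5,3)$.
   Context: $\mathrm{Alt}(p)$ is identified with the group of permutation matrices of even permutations (via $\alpha\mapsto[\delta_{i\alpha,j}]_{i,j}$), acting by conjugation on the group $\mathrm{D}(p,\mathbb{C})$ of invertible diagonal matrices. $D$ is the torsion subgroup of $\mathrm{D}(p,\mathbb{C})$ and $D_{\{q\}}$ its subgroup of elements of $q$-power order. $X=\mathrm{SL}(p,\mathbb{C})\cap\mathrm{D}(p,\mathbb{C})$ and $X_{\{3\}}$ its subgroup of elements of $3$-power order (for $p=5$). *)

(* Defs.v *)
From HB Require Import structures.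
From mathcomp Require Import all_boot all_order all_algebra all_fingroup all_solvable all_field.
Set Implicit Arguments. Unset Strict Implicit. Unset Printing Implicit Defensive.
Import GRing.Theory Num.Theory.
Local Open Scope ring_scope.

(* The complex field is modelled by an arbitrary numClosedFieldType C
   (algebraically closed field of characteristic 0, e.g. complex numbers). *)

Definition mxpow (C : numClosedFieldType) (p : nat) (A : 'M[C]_p) (k : nat) : 'M[C]_p :=
  iter k (mulmx A) 1%:M.

(* Right action of a permutation a (identified with the permutation matrix
   P_a = [delta_{i a, j}] = perm_mx a) by conjugation: d^a = P_a^-1 d P_a. *)
Definition mxact (C : numClosedFieldType) (p : nat) (d : 'M[C]_p) (a : 'S_p) : 'M[C]_p :=
  invmx (perm_mx a) *m d *m perm_mx a.

Definition inDq (C : numClosedFieldType) (p q : nat) (A : 'M[C]_p) : Prop :=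
  [/\ is_diag_mx A, A \in unitmx & exists n, mxpow A (q ^ n) = 1%:M].

Definition inX3 (C : numClosedFieldType) (p : nat) (A : 'M[C]_p) : Prop :=
  inDq 3 A /\ \det A = 1.

Definition cocycle (C : numClosedFieldType) (p : nat) (M : 'M[C]_p -> Prop)
  (f : 'S_p -> 'M[C]_p) : Prop :=
  (forall g, g \in ('Alt_('I_p))%g -> M (f g)) /\
  (forall g h, g \in ('Alt_('I_p))%g -> h \in ('Alt_('I_p))%g ->
     f (g * h)%g = mxact (f g) h *m f h).

Definition coboundary (C : numClosedFieldType) (p : nat) (M : 'M[C]_p -> Prop)
  (f : 'S_p -> 'M[C]_p) : Prop :=
  exists2 m, M m & forall g, g \in ('Alt_('I_p))%g -> f g = invmx m *m mxact m g.

Definition H1_trivial (C : numClosedFieldType) (p : nat) (M : 'M[C]_p -> Prop) : Prop :=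
  forall f, cocycle M f -> coboundary M f.

(* H^1(Alt(p), M) = Z^1/B^1 is cyclic of order n: generated by the class
   of a cocycle f whose class has order exactly n. *)
Definition H1_cyclic_of_order (C : numClosedFieldType) (p : nat) (M : 'M[C]_p -> Prop)
  (n : nat) : Prop :=
  exists f, [/\ cocycle M f,
    (forall k, (0 < k < n)%N -> ~ coboundary M (fun g => mxpow (f g) k)),
    coboundary M (fun g => mxpow (f g) n) &
    (forall z, cocycle M z -> exists k, (k < n)%N /\
       exists2 b, coboundary M b &
         forall g, g \in ('Alt_('I_p))%g -> z g = mxpow (f g) k *m b g)].

(* Main.v *)
Require Import Defs.
From HB Require Import structures.
From mathcomp Require Import all_boot all_order all_algebra all_fingroup all_solvable all_field.
From mathcomp Require Import ring.
Set Implicit Arguments. Unset Strict Implicit. Unset Printing Implicit Defensive.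
Import GRing.Theory Num.Theory.

Local Close Scope ring_scope.
Local Close Scope group_scope.

Local Open Scope ring_scope.

Definition dg (C : numClosedFieldType) n (d : 'I_n -> C) : 'M[C]_n :=
  \matrix_(i, j) (d i *+ (i == j)).

Lemma dgE (C : numClosedFieldType) n (d : 'I_n -> C) i j : dg d i j = d i *+ (i == j).
Proof. by rewrite mxE. Qed.

Lemma dg_diag (C : numClosedFieldType) n (d : 'I_n -> C) : is_diag_mx (dg d).
Proof. by apply/is_diag_mxP => i j hij; rewrite dgE; case: eqP => // h; rewrite h eqxx in hij. Qed.

Lemma diag_dg (C : numClosedFieldType) n (A : 'M[C]_n) :
  is_diag_mx A -> A = dg (fun i => A i i).
Proof.
move/is_diag_mxP => h; apply/matrixP => i j; rewrite dgE.
by case: eqP => [->|/eqP nij]; rewrite ?mulr1n // mulr0n h.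
Qed.

Lemma diag_mulE (C : numClosedFieldType) n (A B : 'M[C]_n) i j :
  is_diag_mx A -> (A *m B) i j = A i i * B i j.
Proof.
move/is_diag_mxP => h; rewrite mxE (bigD1 i) //= big1 ?addr0 // => k nki.
by rewrite h ?mul0r // eq_sym.
Qed.

Lemma dg_mul (C : numClosedFieldType) n (d e : 'I_n -> C) :
  dg d *m dg e = dg (fun i => d i * e i).
Proof.
apply/matrixP => i j; rewrite diag_mulE ?dg_diag // !dgE eqxx mulr1n.
by case: eqP; rewrite ?mulr1n ?mulr0n ?mulr0.
Qed.

Lemma dg_eq (C : numClosedFieldType) n (d e : 'I_n -> C) :
  dg d = dg e -> forall i, d i = e i.
Proof. by move=> h i; have := congr1 (fun M : 'M[C]_n => M i i) h; rewrite !dgE eqxx !mulr1n. Qed.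

Lemma dg_ext (C : numClosedFieldType) n (d e : 'I_n -> C) :
  (forall i, d i = e i) -> dg d = dg e.
Proof. by move=> h; apply/matrixP => i j; rewrite !dgE h. Qed.

Lemma dg1 (C : numClosedFieldType) n : dg (fun _ : 'I_n => (1 : C)) = 1%:M.
Proof. by apply/matrixP => i j; rewrite dgE mxE. Qed.

Lemma dg_det (C : numClosedFieldType) n (d : 'I_n -> C) : \det (dg d) = \prod_i d i.
Proof.
have -> : dg d = diag_mx (\row_i d i) by apply/matrixP => i j; rewrite !mxE.
by rewrite det_diag; apply: eq_bigr => i _; rewrite mxE.
Qed.

Lemma dg_unit (C : numClosedFieldType) n (d : 'I_n -> C) :
  (forall i, d i != 0) -> dg d \in unitmx.
Proof. by move=> h; rewrite unitmxE dg_det unitfE; apply/prodf_neq0 => i _. Qed.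

Lemma dg_unitP (C : numClosedFieldType) n (d : 'I_n -> C) :
  dg d \in unitmx -> forall i, d i != 0.
Proof. by rewrite unitmxE dg_det unitfE => /prodf_neq0 h i; apply: h. Qed.

Lemma dg_inv (C : numClosedFieldType) n (d : 'I_n -> C) :
  (forall i, d i != 0) -> invmx (dg d) = dg (fun i => (d i)^-1).
Proof.
move=> h; have U := dg_unit h.
have E : dg (fun i => (d i)^-1) *m dg d = 1%:M.
  by rewrite dg_mul -dg1; apply: dg_ext => i; rewrite mulVf.
by rewrite -[LHS]mul1mx -E -mulmxA mulmxV // mulmx1.
Qed.

Lemma invmx_perm (C : numClosedFieldType) n (s : 'S_n) :
  invmx (perm_mx s : 'M[C]_n) = perm_mx (s^-1)%g.
Proof.
have E : (perm_mx (s^-1)%g : 'M[C]_n) *m perm_mx s = 1%:M by rewrite -perm_mxM mulVg perm_mx1.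
by rewrite -[LHS]mul1mx -E -mulmxA mulmxV ?unitmx_perm // mulmx1.
Qed.

Lemma mxactE (C : numClosedFieldType) n (d : 'M[C]_n) (a : 'S_n) i j :
  mxact d a i j = d ((a^-1)%g i) ((a^-1)%g j).
Proof.
rewrite /mxact invmx_perm -row_permE.
have -> : perm_mx a = perm_mx ((a^-1)^-1)%g :> 'M[C]_n by rewrite invgK.
by rewrite -col_permE !mxE.
Qed.

Lemma dg_act (C : numClosedFieldType) n (d : 'I_n -> C) (a : 'S_n) :
  mxact (dg d) a = dg (fun i => d ((a^-1)%g i)).
Proof.
apply/matrixP => i j; rewrite mxactE !dgE.
by rewrite (inj_eq (@perm_inj _ _)).
Qed.

Lemma dg_pow (C : numClosedFieldType) n (d : 'I_n -> C) k :
  mxpow (dg d) k = dg (fun i => d i ^+ k).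
Proof.
elim: k => [|k IH]; first by rewrite /mxpow /= -dg1; apply: dg_ext => i; rewrite expr0.
rewrite /mxpow iterS -/(mxpow _ _) IH dg_mul; apply: dg_ext => i; by rewrite exprS.
Qed.

Lemma act1 (C : numClosedFieldType) n (a : 'S_n) : mxact (1%:M : 'M[C]_n) a = 1%:M.
Proof. by rewrite -dg1 dg_act. Qed.

Lemma dg_detact (C : numClosedFieldType) n (d : 'M[C]_n) (a : 'S_n) :
  \det (mxact d a) = \det d.
Proof.
rewrite /mxact !det_mulmx mulrC mulrA -det_mulmx mulmxV ?unitmx_perm //.
by rewrite det1 mul1r.
Qed.

Local Close Scope ring_scope.
Local Close Scope group_scope.


Lemma prod_tperm_fix n (S : pred 'I_n) (s : 'S_n) :
  (forall x, ~~ S x -> s x = x) ->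
  exists2 ts : seq ('I_n * 'I_n), s = (\prod_(t <- ts) tperm t.1 t.2)%g &
    all (fun t => [&& t.1 != t.2, S t.1 & S t.2]) ts.
Proof.
have [m] := ubnP #|[pred x | s x != x]|; elim: m s => // m IHm s /ltnSE-le_s_m hS.
case: (pickP (fun x => s x != x)) => [x s_x | s_id]; last first.
  exists nil; rewrite // big_nil; apply/permP=> x.
  by apply/eqP/idPn; rewrite perm1 s_id.
have Sx : S x by apply: contraR s_x => /hS ->.
have Sy : S ((s^-1)%g x).
  apply: contraR s_x => /hS h; rewrite permKV in h; by rewrite {1}h permKV eqxx.
set s' := ((tperm x ((s^-1)%g x)) * s)%g.
have hlt : (#|[pred y | s' y != y]| < m)%N.
  rewrite (cardD1 x) !inE s_x in le_s_m; apply: leq_ltn_trans le_s_m.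
  apply: subset_leq_card; apply/subsetP=> y.
  rewrite !inE permM permE /= -(canF_eq (permK _)).
  have [-> | ne_yx] := eqVneq y x; first by rewrite permKV eqxx.
  by case: (s y =P x) => // -> _; rewrite eq_sym.
have hS' : forall y, ~~ S y -> s' y = y.
  move=> y nSy; have sy := hS y nSy; rewrite permM tpermD ?sy //.
    by apply: contraNneq nSy => <-.
  by apply: contraNneq nSy => <-.
have [ts def_s ne_ts] := IHm s' hlt hS'.
exists ((x, (s^-1)%g x) :: ts); last first.
  have nx : x != (s^-1)%g x.
    by apply: contra s_x => /eqP {1}->; rewrite permKV.
  by rewrite /= ne_ts Sx Sy nx.
by rewrite big_cons -def_s mulgA tperm2 mul1g.
Qed.

Lemma alt_ind n (S : pred 'I_n) (P : 'S_n -> Prop) :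
  P 1%g ->
  (forall a b c d s, S a -> S b -> S c -> S d -> a != b -> c != d -> P s ->
      P (tperm a b * tperm c d * s)%g) ->
  forall s, s \in ('Alt_('I_n))%g -> (forall x, ~~ S x -> s x = x) -> P s.
Proof.
move=> P1 PS s sA hS; have [ts def_s hts] := prod_tperm_fix hS.
have dts : all dpair ts by apply: sub_all hts => t /and3P [].
move: sA; rewrite Alt_even def_s odd_perm_prod // => ev.
clear def_s dts; move: ts ev hts.
have [m] := ubnP 0; move=> _.
suff H : forall k (ts : seq ('I_n * 'I_n)), (size ts <= k)%N -> ~~ odd (size ts) ->
   all (fun t => [&& t.1 != t.2, S t.1 & S t.2]) ts ->
   P (\prod_(t <- ts) tperm t.1 t.2)%g.
  by move=> ts; apply: (H (size ts)).
elim=> [|k IH] [|[a b] [|[c d] ts]] //=; rewrite ?big_nil //.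
rewrite ltnS negbK => /ltnW lek ev /and3P [/and3P [ab Sa Sb] /and3P [cd Sc Sd] hts].
rewrite !big_cons mulgA; apply: PS => //; apply: IH => //.
Qed.


Local Open Scope group_scope.

Lemma tperm_comm (T : finType) (a b c d : T) :
  c != a -> c != b -> d != a -> d != b ->
  tperm a b * tperm c d = tperm c d * tperm a b.
Proof.
move=> ca cb da db.
have h : (tperm c d ^ tperm a b) = tperm c d.
  by rewrite tpermJ !tpermD // eq_sym.
by rewrite -{2}h conjgE tpermV -!mulgA tperm2 mulg1.
Qed.

Lemma tperm_ABA (T : finType) (a b c : T) :
  a != b -> b != c -> a != c -> tperm a b * tperm b c * tperm a b = tperm a c.
Proof.
move=> ab bc ac.
have h := tpermJ b c (tperm a b); rewrite tpermR tpermD ?(eq_sym c) // in h.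
by rewrite -h conjgE tpermV mulgA.
Qed.

Lemma tperm_BAB (T : finType) (a b c : T) :
  a != b -> b != c -> a != c -> tperm b c * tperm a b * tperm b c = tperm a c.
Proof.
move=> ab bc ac.
have ba : b != a by rewrite eq_sym.
have ca : c != a by rewrite eq_sym.
have h := tpermJ a b (tperm b c); rewrite tpermL tpermD // in h.
by rewrite -h conjgE tpermV mulgA.
Qed.

Lemma cyc_cube (T : finType) (a b c : T) :
  a != b -> b != c -> a != c ->
  (tperm a b * tperm b c) * (tperm a b * tperm b c) * (tperm a b * tperm b c) = 1.
Proof.
move=> ab bc ac.
have -> : (tperm a b * tperm b c) * (tperm a b * tperm b c) * (tperm a b * tperm b c)
   = (tperm a b * tperm b c * tperm a b) * (tperm b c * tperm a b * tperm b c).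
  by rewrite !mulgA.
by rewrite tperm_ABA // tperm_BAB // tperm2.
Qed.

Lemma cyc_conj (T : finType) (a b c d e : T) :
  a != b -> b != c -> a != c ->
  d != a -> d != b -> d != c -> e != a -> e != b -> e != c ->
  let u := tperm a b * tperm d e in
  let c3 := tperm a b * tperm b c in
  u * c3 * u = c3 * c3 /\ u * u = 1.
Proof.
move=> ab bc ac da db dc ea eb ec u c3.
have EA : tperm d e * tperm a b = tperm a b * tperm d e by apply: tperm_comm; rewrite eq_sym.
have EB : tperm d e * tperm b c = tperm b c * tperm d e by apply: tperm_comm; rewrite eq_sym.
split; last first.
  by rewrite /u mulgA -(mulgA (tperm a b)) EA !mulgA tperm2 mul1g tperm2.
rewrite /u /c3.
have -> : tperm a b * tperm d e * (tperm a b * tperm b c) * (tperm a b * tperm d e)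
   = tperm a b * (tperm d e * tperm a b) * tperm b c * tperm a b * tperm d e.
  by rewrite !mulgA.
rewrite EA !mulgA tperm2 mul1g EB -(mulgA (tperm b c)) EA !mulgA.
rewrite -(mulgA _ (tperm d e)) tperm2 mulg1.
have h := tperm_BAB ab bc ac.
have -> : tperm b c * tperm a b = tperm a c * tperm b c.
  by rewrite -h -mulgA tperm2 mulg1.
by rewrite -(tperm_ABA ab bc ac) ?mulgA.
Qed.

Local Open Scope ring_scope.

Lemma hom1 (C : fieldType) n (K : pred 'S_n) (chi : 'S_n -> C) :
  K 1%g -> (forall x y, K x -> K y -> chi (x * y)%g = chi x * chi y) ->
  (forall x, K x -> chi x != 0) -> chi 1%g = 1.
Proof.
move=> K1 hM hN; have := hM _ _ K1 K1; rewrite mulg1 => h.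
by apply: (mulfI (hN _ K1)); rewrite mulr1 -h.
Qed.

Lemma cyc_triv (C : fieldType) n (K : pred 'S_n) (chi : 'S_n -> C) (a b c d e : 'I_n) :
  a != b -> b != c -> a != c ->
  d != a -> d != b -> d != c -> e != a -> e != b -> e != c ->
  (forall x y, K x -> K y -> K (x * y)%g) ->
  (forall x y, K x -> K y -> chi (x * y)%g = chi x * chi y) ->
  (forall x, K x -> chi x != 0) ->
  K (tperm a b * tperm b c)%g -> K (tperm a b * tperm d e)%g ->
  chi (tperm a b * tperm b c)%g = 1.
Proof.
move=> ab bc ac da db dc ea eb ec KM hM hN Kc Ku.
have [h1 h2] := cyc_conj ab bc ac da db dc ea eb ec.
set u := (tperm a b * tperm d e)%g in Ku h1 h2; set c3 := (tperm a b * tperm b c)%g in Kc h1 h2 *.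
have K1 : K 1%g by rewrite -h2; apply: KM.
have e1 := hom1 K1 hM hN.
have uu : chi u * chi u = 1 by rewrite -hM // h2.
have := congr1 chi h1.
rewrite (hM (u * c3)%g u); last 2 first; [by apply: KM| by []|].
rewrite (hM u c3) // (hM c3 c3) // mulrAC uu mul1r => h.
apply: (mulfI (hN _ Kc)); by rewrite mulr1 -h.
Qed.

Lemma cyc_cube_chi (C : fieldType) n (K : pred 'S_n) (chi : 'S_n -> C) (a b c : 'I_n) :
  a != b -> b != c -> a != c -> K 1%g ->
  (forall x y, K x -> K y -> K (x * y)%g) ->
  (forall x y, K x -> K y -> chi (x * y)%g = chi x * chi y) ->
  (forall x, K x -> chi x != 0) ->
  K (tperm a b * tperm b c)%g ->
  chi (tperm a b * tperm b c)%g ^+ 3 = 1.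
Proof.
move=> ab bc ac K1 KM hM hN Kc.
have e1 := hom1 K1 hM hN.
set c3 := (tperm a b * tperm b c)%g in Kc *.
have h := congr1 chi (cyc_cube ab bc ac); rewrite -/c3 e1 in h.
have Kcc : K (c3 * c3)%g by apply: KM.
rewrite (hM (c3 * c3)%g c3) // (hM c3 c3) // in h.
by rewrite -h !exprS expr0 mulr1 mulrA.
Qed.

Lemma pair_triv (C : fieldType) n (S : pred 'I_n) (K : pred 'S_n) (chi : 'S_n -> C)
  (a b c d : 'I_n) : K 1%g ->
  (forall x y, K x -> K y -> K (x * y)%g) ->
  (forall a b c d, S a -> S b -> S c -> S d -> a != b -> c != d -> K (tperm a b * tperm c d)%g) ->
  (forall x y, K x -> K y -> chi (x * y)%g = chi x * chi y) ->
  (forall x, K x -> chi x != 0) ->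
  (forall a b c, S a -> S b -> S c -> a != b -> b != c -> a != c ->
     chi (tperm a b * tperm b c)%g = 1) ->
  S a -> S b -> S c -> S d -> a != b -> c != d -> chi (tperm a b * tperm c d)%g = 1.
Proof.
move=> K1 KM KP hM hN h3 Sa Sb Sc Sd ab cd.
have e1 := hom1 K1 hM hN.
have ba : b != a by rewrite eq_sym.
have [ac|ac] := eqVneq a c.
  subst c; have [bd|bd] := eqVneq b d; first by subst d; rewrite tperm2.
  by rewrite tpermC h3 // eq_sym.
have [ad|ad] := eqVneq a d.
  subst d; have [bc|bc] := eqVneq b c; first by subst c; rewrite (tpermC b a) tperm2.
  by rewrite tpermC (tpermC c a) h3 // eq_sym.
have [bc|bc] := eqVneq b c.
  by subst c; rewrite h3.
have [bd|bd] := eqVneq b d.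
  by subst d; rewrite (tpermC c b) h3 // eq_sym.
have -> : (tperm a b * tperm c d = (tperm a b * tperm b c) * (tperm b c * tperm c d))%g.
  by rewrite mulgA -(mulgA (tperm a b)) tperm2 mulg1.
by rewrite hM ?KP // !h3 ?mulr1.
Qed.

Lemma phi_trivial (C : fieldType) n (S : pred 'I_n) (K : pred 'S_n) (chi : 'S_n -> C) :
  K 1%g ->
  (forall x y, K x -> K y -> K (x * y)%g) ->
  (forall a b c d, S a -> S b -> S c -> S d -> a != b -> c != d -> K (tperm a b * tperm c d)%g) ->
  (forall x y, K x -> K y -> chi (x * y)%g = chi x * chi y) ->
  (forall x, K x -> chi x != 0) ->
  (forall a b c, S a -> S b -> S c -> a != b -> b != c -> a != c ->
     chi (tperm a b * tperm b c)%g = 1) ->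
  forall s, s \in ('Alt_('I_n))%g -> (forall x, ~~ S x -> s x = x) -> K s /\ chi s = 1.
Proof.
move=> K1 KM KP hM hN h3.
apply: (@alt_ind n S (fun s => K s /\ chi s = 1)); first by split => //; exact: (hom1 K1 hM hN).
move=> a b c d s Sa Sb Sc Sd ab cd [Ks cs].
have Kp := KP a b c d Sa Sb Sc Sd ab cd.
split; first by apply: KM.
by rewrite hM // cs mulr1 (pair_triv K1 KM KP hM hN h3).
Qed.

Lemma fresh n (s : seq 'I_n) : (size s < n)%N -> exists x, x \notin s.
Proof.
move=> hs; case: (pickP [pred x | x \notin s]) => [x hx | h]; first by exists x.
have : (#|'I_n| <= size s)%N.
  apply: leq_trans (card_size s); apply: subset_leq_card; apply/subsetP => x _.
  by have := h x; rewrite /= => /negbFE.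
by rewrite card_ord leqNgt hs.
Qed.

Lemma alt_trans n (j z : 'I_n) : (4 <= n)%N -> exists2 s, s \in ('Alt_('I_n))%g & s j = z.
Proof.
move=> n4; have [jz|jz] := eqVneq j z; first by exists 1%g; rewrite ?group1 ?perm1.
have [k hk] := @fresh n [:: j; z] (leq_trans (isT : 2 < 4)%N n4).
have [l hl] := @fresh n [:: j; z; k] (leq_trans (isT : 3 < 4)%N n4).
move: hk hl; rewrite !inE !negb_or => /andP [kj kz] /and3P [lj lz lk].
exists (tperm j z * tperm k l)%g.
  by rewrite Alt_even odd_permM !odd_tperm jz eq_sym lk.
by rewrite permM tpermL tpermD // eq_sym.
Qed.

Local Close Scope ring_scope.
Local Close Scope group_scope.

Local Open Scope ring_scope.

Definition sj n (z j : 'I_n) : 'S_n :=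
  if j == z then 1%g else odflt 1%g [pick s in ('Alt_('I_n))%g | s j == z].

Lemma sjP n (z j : 'I_n) : (4 <= n)%N -> sj z j \in ('Alt_('I_n))%g /\ sj z j j = z.
Proof.
move=> n4; rewrite /sj; have [->|jz] := eqVneq j z; first by rewrite group1 perm1.
case: pickP => [s /andP [sA /eqP sj]|h] //=.
have [s sA sjz] := alt_trans j z n4.
by have := h s; rewrite sA sjz eqxx.
Qed.

Lemma sjz n (z : 'I_n) : sj z z = 1%g.
Proof. by rewrite /sj eqxx. Qed.

Lemma shapiro (C : fieldType) n (z : 'I_n) (F : 'S_n -> 'I_n -> C) :
  (4 <= n)%N ->
  (forall g h, g \in ('Alt_('I_n))%g -> h \in ('Alt_('I_n))%g -> forall i,
      F (g * h)%g i = F g ((h^-1)%g i) * F h i) ->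
  (forall g, g \in ('Alt_('I_n))%g -> forall i, F g i != 0) ->
  (forall h, h \in ('Alt_('I_n))%g -> h z = z -> F h z = 1) ->
  forall g, g \in ('Alt_('I_n))%g -> forall i,
    F g i = (F (sj z i) z)^-1 * F (sj z ((g^-1)%g i)) z.
Proof.
move=> n4 hC hN hH g gA i.
have [sA si] := sjP z i n4.
set j := (g^-1)%g i.
have [tA tj] := sjP z j n4.
set s := sj z i in sA si *; set t := sj z j in tA tj *.
have e1 : F (g * s)%g z = F g i * F s z.
  by rewrite hC // -si permK.
have hA : (t^-1 * g * s)%g \in ('Alt_('I_n))%g by rewrite !groupM ?groupV.
have hz : (t^-1 * g * s)%g z = z.
  by rewrite !permM -{1}tj permK /j permKV si.
have e2 : F (g * s)%g z = F t z.
  have -> : (g * s = t * (t^-1 * g * s))%g by rewrite !mulgA mulgV mul1g.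
  rewrite hC // (hH _ hA hz) mulr1.
  by rewrite -{1}hz permK.
apply: (mulfI (hN _ sA z)); by rewrite mulrA mulfV ?hN // mul1r -e2 e1 mulrC.
Qed.

Local Close Scope ring_scope.
Local Close Scope group_scope.

Local Open Scope ring_scope.

Lemma unif (T : finType) (P : T -> nat -> Prop) :
  (forall t a b, (a <= b)%N -> P t a -> P t b) -> (forall t, exists a, P t a) ->
  exists N, forall t, P t N.
Proof.
move=> mono ex.
suff [N hN] : exists N, forall t, t \in enum T -> P t N.
  by exists N => t; apply: hN; rewrite mem_enum.
elim: (enum T) => [|x s [N hN]]; first by exists 0%N.
have [a ha] := ex x; exists (maxn a N) => t; rewrite inE => /orP [/eqP ->|ts].
  by apply: mono ha; rewrite leq_maxl.
by apply: mono (hN _ ts); rewrite leq_maxr.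
Qed.

Lemma pow_mono (C : fieldType) (x : C) q a b : (a <= b)%N -> x ^+ (q ^ a) = 1 -> x ^+ (q ^ b) = 1.
Proof. by move=> ab h; rewrite -(subnKC ab) expnD exprM h expr1n. Qed.

Lemma root_cop (C : fieldType) (x : C) q k : prime q -> q != 3%N -> x ^+ 3 = 1 -> x ^+ (q ^ k) = 1 -> x = 1.
Proof.
move=> pq q3 x3 xq.
have nd : ~~ (3 %| q ^ k)%N.
  rewrite Euclid_dvdX //; apply/nandP; left.
  by rewrite dvdn_prime2 // eq_sym.
move: xq; rewrite (divn_eq (q ^ k) 3) exprD mulnC exprM x3 expr1n mul1r.
have : (q ^ k %% 3 < 3)%N by rewrite ltn_mod.
move: nd; rewrite /dvdn; case: (q ^ k %% 3)%N => [|[|[|r]]] //=.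
move=> _ _ x2; by rewrite -x3 exprS x2 mulr1.
Qed.

Lemma cocycle_dg (C : numClosedFieldType) n (M : 'M[C]_n -> Prop) (f : 'S_n -> 'M[C]_n) :
  (forall A, M A -> is_diag_mx A /\ A \in unitmx) ->
  cocycle M f ->
  [/\ forall g, g \in ('Alt_('I_n))%g -> f g = dg (fun i => f g i i),
      forall g, g \in ('Alt_('I_n))%g -> forall i, f g i i != 0 &
      forall g h, g \in ('Alt_('I_n))%g -> h \in ('Alt_('I_n))%g -> forall i,
        f (g * h)%g i i = f g ((h^-1)%g i) ((h^-1)%g i) * f h i i].
Proof.
move=> hM [fM fC].
have fD : forall g, g \in ('Alt_('I_n))%g -> f g = dg (fun i => f g i i).
  by move=> g gA; apply: diag_dg; case: (hM _ (fM _ gA)).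
split => //.
  move=> g gA; apply: dg_unitP; rewrite -fD //; by case: (hM _ (fM _ gA)).
move=> g h gA hA.
apply: (@dg_eq C n (fun i => f (g * h)%g i i) (fun i => f g ((h^-1)%g i) ((h^-1)%g i) * f h i i)).
have ghA : (g * h)%g \in ('Alt_('I_n))%g by rewrite groupM.
rewrite -(fD _ ghA) fC //.
by rewrite {1}(fD g gA) {1}(fD h hA) dg_act dg_mul.
Qed.

Lemma part2 (C : numClosedFieldType) (p q : nat) :
  prime p -> (5 <= p)%N -> prime q -> (p, q) <> (5%N, 3%N) ->
  H1_trivial (@inDq C p q).
Proof.
move=> pp p5 pq pq53 f fcoc.
have p4 : (4 <= p)%N by apply: ltnW.
have p0 : (0 < p)%N by apply: leq_trans p5.
set z : 'I_p := Ordinal p0.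
have [fD FN FC] := cocycle_dg (fun A (hA : inDq q A) => let: And3 a b _ := hA in conj a b) fcoc.
have [fM _] := fcoc.
set F := fun g i => f g i i.
have Fq : forall g, g \in ('Alt_('I_p))%g -> exists k, forall i, F g i ^+ (q ^ k) = 1.
  move=> g gA; have [_ _ [k hk]] := fM _ gA; exists k => i.
  by move: hk; rewrite fD // dg_pow -dg1 => /dg_eq ->.
pose K := [pred s : 'S_p | (s \in ('Alt_('I_p))%g) && (s z == z)].
have H1 : forall h, h \in ('Alt_('I_p))%g -> h z = z -> F h z = 1.
  move=> h hA hz.
  have K1 : K 1%g by rewrite /= group1 perm1 eqxx.
  have KM : forall x y, K x -> K y -> K (x * y)%g.
    move=> x y /andP [xA /eqP xz] /andP [yA /eqP yz]; by rewrite /= groupM // permM xz yz eqxx.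
  have KP : forall a b c d, a != z -> b != z -> c != z -> d != z -> a != b -> c != d ->
      K (tperm a b * tperm c d)%g.
    move=> a b c d az bz cz dz ab cd.
    rewrite /= Alt_even odd_permM !odd_tperm ab cd /= permM.
    by rewrite (tpermD az bz) (tpermD cz dz).
  have hM : forall x y, K x -> K y -> F (x * y)%g z = F x z * F y z.
    move=> x y /andP [xA /eqP xz] /andP [yA /eqP yz].
    have yz' : (y^-1)%g z = z by rewrite -{1}yz permK.
    by rewrite /F FC // yz'.
  have hN : forall x, K x -> F x z != 0 by move=> x /andP [xA _]; apply: FN.
  have h3 : forall a b c, a != z -> b != z -> c != z -> a != b -> b != c -> a != c ->
      F (tperm a b * tperm b c)%g z = 1.
    move=> a b c az bz cz ab bc ac.
    have Kc : K (tperm a b * tperm b c)%g by apply: KP.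
    have [q3|q3] := eqVneq q 3%N.
      have p6 : (6 <= p)%N.
        rewrite ltn_neqAle p5 andbT; apply/eqP => p5'; apply: pq53; by rewrite -p5' q3.
      have [d hd] := @fresh p [:: z; a; b; c] (leq_trans (isT : 4 < 6)%N p6).
      have [e he] := @fresh p [:: z; a; b; c; d] (leq_trans (isT : 5 < 6)%N p6).
      move: hd he; rewrite !inE !negb_or => /and4P [dz da db dc] /and5P [ez ea eb ec ed].
      have Ku : K (tperm a b * tperm d e)%g by apply: KP => //; rewrite eq_sym.
      exact: (cyc_triv ab bc ac da db dc ea eb ec KM hM hN Kc Ku).
    have x3 := cyc_cube_chi ab bc ac K1 KM hM hN Kc.
    have [cA _] := andP Kc.
    have [k hk] := Fq _ cA.
    exact: (root_cop pq q3 x3 (hk z)).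
  have := phi_trivial K1 KM KP hM hN h3 hA.
  case=> [x /negbNE /eqP -> //|_ //].
set mm := fun j => F (sj z j) z.
have mmN : forall j, mm j != 0.
  by move=> j; have [sA _] := sjP z j p4; apply: FN.
have mmq : exists N, forall j, mm j ^+ (q ^ N) = 1.
  apply: (unif (P := fun j N => mm j ^+ (q ^ N) = 1)).
    by move=> j a b ab; apply: pow_mono.
  by move=> j; have [sA _] := sjP z j p4; have [k hk] := Fq _ sA; exists k; apply: hk.
have [N hN] := mmq.
exists (dg mm).
  split; [exact: dg_diag | exact: dg_unit | exists N].
  by rewrite dg_pow -dg1; apply: dg_ext.
move=> g gA; rewrite fD // dg_inv // dg_act dg_mul; apply: dg_ext => i.
exact: (shapiro p4 FC FN H1 gA).
Qed.

Local Close Scope ring_scope.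
Local Close Scope group_scope.


Definition f2t (s : 'S_5) : seq nat := [seq val (s (inord i)) | i <- iota 0 5].
Definition compt (u w : seq nat) : seq nat := [seq nth 0 w k | k <- u].
Definition tpt (a b : nat) : seq nat :=
  [seq (if i == a then b else if i == b then a else i) | i <- iota 0 5].
Definition idt : seq nat := iota 0 5.
Definition c0t := compt (tpt 1 2) (tpt 2 3).
Definition Vt := [:: idt; compt (tpt 1 2) (tpt 3 4); compt (tpt 1 3) (tpt 2 4); compt (tpt 1 4) (tpt 2 3)].
Definition powt (k : nat) := iter k (fun t => compt t c0t) idt.
Definition Lt := [seq compt (powt k) v | k <- [:: 0; 1; 2]%N, v <- Vt].
Definition et (t : seq nat) := (index t Lt %/ 4)%N.
Definition R4 := iota 1 4.

Lemma C1 : all (fun a => all (fun b => all (fun c => all (fun d =>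
   (a != b) && (c != d) ==> all (fun t => compt (compt (tpt a b) (tpt c d)) t \in Lt) Lt)
   R4) R4) R4) R4.
Proof. by vm_compute. Qed.
Lemma C2 : idt \in Lt. Proof. by vm_compute. Qed.
Lemma C3 : all (fun t1 => all (fun t2 => et (compt t1 t2) == ((et t1 + et t2) %% 3)%N) Lt) Lt.
Proof. by vm_compute. Qed.
Lemma C4 : et c0t = 1%N. Proof. by vm_compute. Qed.
Lemma C5 : all (fun v => compt v v == idt) Vt. Proof. by vm_compute. Qed.

Local Open Scope group_scope.

Lemma nth_f2t (s : 'S_5) (x : 'I_5) : nth 0%N (f2t s) x = val (s x).
Proof.
rewrite /f2t (nth_map 0%N) ?size_iota ?ltn_ord // nth_iota ?ltn_ord //.
by rewrite add0n inord_val.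
Qed.

Lemma f2tM (s t : 'S_5) : f2t (s * t) = compt (f2t s) (f2t t).
Proof.
rewrite /compt {2}/f2t -map_comp; apply: eq_map => i /=.
by rewrite nth_f2t permM.
Qed.

Lemma f2t_inj (s t : 'S_5) : f2t s = f2t t -> s = t.
Proof.
move=> h; apply/permP => x; apply: val_inj.
by rewrite -!nth_f2t h.
Qed.

Lemma f2t1 : f2t 1 = idt.
Proof.
rewrite /f2t /idt -[RHS]map_id; apply/eq_in_map => i; rewrite mem_iota /= => hi.
by rewrite perm1 inordK.
Qed.

Lemma f2t_tperm (a b : 'I_5) : f2t (tperm a b) = tpt a b.
Proof.
rewrite /f2t /tpt; apply/eq_in_map => i; rewrite mem_iota /= => hi.
have ei : forall c : 'I_5, (inord i == c) = (i == c).
  by move=> c; rewrite -(inj_eq val_inj) /= inordK.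
case: tpermP => [e|e|ne1 ne2].
- have -> : i = a by rewrite -e inordK.
  by rewrite eqxx.
- have -> : i = b by rewrite -e inordK.
  by case: eqP => [->|_]; rewrite ?eqxx.
- have n1 : (i == a) = false by apply/eqP => h; apply: ne1; apply: val_inj; rewrite /= inordK // h.
  have n2 : (i == b) = false by apply/eqP => h; apply: ne2; apply: val_inj; rewrite /= inordK // h.
  by rewrite n1 n2 inordK.
Qed.

Local Close Scope ring_scope.
Local Close Scope group_scope.

Local Open Scope group_scope.

Definition z5 : 'I_5 := ord0.
Definition o5 (k : nat) : 'I_5 := inord k.
Definition K5 (s : 'S_5) : bool := (s \in ('Alt_('I_5))%g) && (s z5 == z5).
Definition c0 : 'S_5 := tperm (o5 1) (o5 2) * tperm (o5 2) (o5 3).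
Definition Vp : seq 'S_5 := [:: 1; tperm (o5 1) (o5 2) * tperm (o5 3) (o5 4);
   tperm (o5 1) (o5 3) * tperm (o5 2) (o5 4); tperm (o5 1) (o5 4) * tperm (o5 2) (o5 3)].

Lemma K5_1 : K5 1. Proof. by rewrite /K5 group1 perm1 eqxx. Qed.

Lemma K5M x y : K5 x -> K5 y -> K5 (x * y).
Proof. move=> /andP [xA /eqP xz] /andP [yA /eqP yz]; by rewrite /K5 groupM // permM xz yz eqxx. Qed.

Lemma K5P (a b c d : 'I_5) : a != z5 -> b != z5 -> c != z5 -> d != z5 -> a != b -> c != d ->
      K5 (tperm a b * tperm c d).
Proof.
move=> az bz cz dz ab cd.
rewrite /K5 Alt_even odd_permM !odd_tperm ab cd /= permM.
by rewrite (tpermD az bz) (tpermD cz dz).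
Qed.

Lemma o5K k : (k < 5)%N -> val (o5 k) = k.
Proof. by move=> h; apply: inordK. Qed.

Lemma o5_neq (a b : nat) : (a < 5)%N -> (b < 5)%N -> a != b -> o5 a != o5 b.
Proof. by move=> ha hb ab; rewrite -(inj_eq val_inj) /= !o5K. Qed.

Lemma o5_nz (a : nat) : (0 < a < 5)%N -> o5 a != z5.
Proof. by case/andP => a0 a5; rewrite -(inj_eq val_inj) /= o5K // -lt0n. Qed.

Lemma K5c0 : K5 c0.
Proof. by apply: K5P; apply: o5_nz || apply: o5_neq. Qed.

Lemma inLt h : K5 h -> f2t h \in Lt.
Proof.
case/andP => hA /eqP hz.
have := @alt_ind 5 [pred x | x != z5] (fun s => f2t s \in Lt).
apply; [by rewrite f2t1 C2| |by []|]; last first.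
  by move=> x /negbNE /eqP ->.
move=> a b c d s az bz cz dz ab cd hs.
rewrite !f2tM !f2t_tperm.
have R : forall x : 'I_5, x != z5 -> (val x \in R4).
  by move=> x xz; rewrite mem_iota ltn_ord andbT lt0n; move: xz; rewrite -(inj_eq val_inj).
have /allP H1 := C1.
have /allP H2 := H1 _ (R _ az).
have /allP H3 := H2 _ (R _ bz).
have /allP H4 := H3 _ (R _ cz).
move: (H4 _ (R _ dz)) => /implyP H5.
have /allP H6 := H5 (introT andP (conj ab cd)).
exact: H6.
Qed.

Lemma et_hom x y : K5 x -> K5 y -> et (f2t (x * y)) = ((et (f2t x) + et (f2t y)) %% 3)%N.
Proof.
move=> /inLt hx /inLt hy; rewrite f2tM.
have /allP H1 := C3.
have /allP H2 := H1 _ hx.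
by have /eqP := H2 _ hy.
Qed.

Lemma et_c0 : et (f2t c0) = 1%N.
Proof. by rewrite f2tM !f2t_tperm !o5K // C4. Qed.

Lemma f2t_c0pow k : f2t (c0 ^+ k) = powt k.
Proof.
elim: k => [|k IH]; first by rewrite expg0 f2t1.
by rewrite expgSr f2tM IH /powt iterS -/(powt k) /c0 f2tM !f2t_tperm !o5K.
Qed.

Lemma VtE : Vt = map f2t Vp.
Proof. by rewrite /= f2t1 !f2tM !f2t_tperm !o5K. Qed.

Lemma decomp h : K5 h -> exists k, exists2 v, v \in Vp & h = c0 ^+ k * v.
Proof.
move=> /inLt; rewrite /Lt => /allpairsP [[k v] [_ hv /= e]].
move: hv; rewrite VtE => /mapP [vp vpV ev].
exists k, vp => //; apply: f2t_inj.
by rewrite e /= f2tM f2t_c0pow; congr compt; exact: ev.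
Qed.

Lemma Vp_props v : v \in Vp -> K5 v /\ v * v = 1.
Proof.
move=> vV; split.
  have: v \in Vp by [].
  rewrite !inE => /or4P [] /eqP ->; first exact: K5_1.
  - by apply: K5P; apply: o5_nz || apply: o5_neq.
  - by apply: K5P; apply: o5_nz || apply: o5_neq.
  - by apply: K5P; apply: o5_nz || apply: o5_neq.
apply: f2t_inj; rewrite f2tM f2t1.
have /allP H := C5; apply/eqP; apply: H.
by rewrite VtE; apply: map_f.
Qed.

Lemma K5c0pow k : K5 (c0 ^+ k).
Proof. by elim: k => [|k IH]; rewrite ?expg0 ?K5_1 // expgSr K5M // K5c0. Qed.

Local Open Scope ring_scope.

Lemma sq_odd (C : fieldType) (x : C) a : x ^+ 2 = 1 -> x ^+ (3 ^ a) = 1 -> x = 1.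
Proof.
move=> x2; have o : odd (3 ^ a) by rewrite oddX orbT.
rewrite -(odd_double_half (3 ^ a)) o -muln2 exprD expr1 mulnC exprM x2 expr1n mulr1.
by [].
Qed.

Lemma P3 (C : fieldType) (chi : 'S_5 -> C) :
  (forall x y, K5 x -> K5 y -> chi (x * y)%g = chi x * chi y) ->
  (forall x, K5 x -> chi x != 0) ->
  (forall h, K5 h -> exists a, chi h ^+ (3 ^ a) = 1) ->
  chi c0 = 1 -> forall h, K5 h -> chi h = 1.
Proof.
move=> hM hN h3 hc h Kh.
have e1 := hom1 K5_1 hM hN.
have [k [v vV ->]] := decomp Kh.
have [Kv vv] := Vp_props vV.
have ck : chi (c0 ^+ k)%g = 1.
  elim: k => [|k IH]; first by rewrite expg0.
  by rewrite expgSr hM ?K5c0pow ?K5c0 // IH hc mulr1.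
rewrite hM ?K5c0pow // ck mul1r.
have [a ha] := h3 _ Kv.
apply: sq_odd ha.
by rewrite expr2 -hM // vv.
Qed.

Local Close Scope ring_scope.
Local Close Scope group_scope.

Local Open Scope ring_scope.

Lemma omega_ex (C : numClosedFieldType) :
  exists w : C, [/\ w ^+ 3 = 1, w != 1, w ^+ 2 != 1 & w ^+ 2 + w + 1 = 0].
Proof.
have [w hw] := @solve_monicpoly C 2 (fun _ => -1) isT.
rewrite !big_ord_recr big_ord0 /= add0r !mulN1r expr0 expr1 in hw.
have e : w ^+ 2 + w + 1 = 0 by rewrite hw; ring.
have w3 : w ^+ 3 = 1.
  apply/eqP; rewrite -subr_eq0; apply/eqP.
  have -> : w ^+ 3 - 1 = (w - 1) * (w ^+ 2 + w + 1) by ring.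
  by rewrite e mulr0.
have w1 : w != 1.
  apply/eqP => w1; move: e; rewrite w1 expr1n => /eqP.
  have -> : (1 + 1 + 1 : C) = 3%:R by ring.
  by rewrite pnatr_eq0.
exists w; split => //; apply/negP => /eqP w2; apply: (negP w1); apply/eqP.
by rewrite -w3 exprS w2 mulr1.
Qed.

Lemma cube_roots (C : fieldType) (w x : C) : w ^+ 3 = 1 -> w ^+ 2 + w + 1 = 0 ->
  x ^+ 3 = 1 -> exists2 k, (k < 3)%N & x = w ^+ k.
Proof.
move=> w3 e x3.
have : (x - 1) * (x - w) * (x - w ^+ 2) = 0.
  have -> : (x - 1) * (x - w) * (x - w ^+ 2) =
     x ^+ 3 - 1 - (x - 1) * x * (w ^+ 2 + w + 1) + (x - 1) * (w ^+ 3 - 1) by ring.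
  by rewrite e w3 x3 mulr0 subrr !subr0 mulr0 addr0.
move/eqP; rewrite !mulf_eq0 !subr_eq0 => /orP [/orP [] | ] /eqP ->.
- by exists 0%N; rewrite ?expr0.
- by exists 1%N; rewrite ?expr1.
- by exists 2%N.
Qed.

Lemma w_mod (C : fieldType) (w : C) n : w ^+ 3 = 1 -> w ^+ (n %% 3) = w ^+ n.
Proof. by move=> w3; rewrite {2}(divn_eq n 3) exprD mulnC exprM w3 expr1n mul1r. Qed.

Definition Psi_def (C : fieldType) (w : C) (h : 'S_5) : C := w ^+ et (f2t h).
Fact Psi_key : unit. Proof. exact: tt. Qed.
Definition Psi := locked_with Psi_key Psi_def.
Lemma PsiE (C : fieldType) (w : C) h : Psi w h = w ^+ et (f2t h).
Proof. by rewrite /Psi unlock. Qed.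
Definition Fc_def (C : fieldType) (w : C) (g : 'S_5) (i : 'I_5) : C :=
  Psi w ((sj z5 ((g^-1)%g i))^-1 * g * sj z5 i)%g.
Fact Fc_key : unit. Proof. exact: tt. Qed.
Definition Fc := locked_with Fc_key Fc_def.
Lemma FcE (C : fieldType) (w : C) g i : Fc w g i = Psi w ((sj z5 ((g^-1)%g i))^-1 * g * sj z5 i)%g.
Proof. by rewrite /Fc unlock. Qed.

Lemma Psi_hom (C : fieldType) (w : C) x y : w ^+ 3 = 1 -> K5 x -> K5 y ->
  Psi w (x * y)%g = Psi w x * Psi w y.
Proof. by move=> w3 Kx Ky; rewrite !PsiE et_hom // w_mod // exprD. Qed.

Lemma Psi_nz (C : fieldType) (w : C) x : w ^+ 3 = 1 -> Psi w x != 0.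
Proof.
move=> w3; rewrite PsiE expf_neq0 //; apply/eqP => w0; move: w3.
by rewrite w0 expr0n /= => /eqP; rewrite eq_sym oner_eq0.
Qed.

Lemma Fc_nz (C : fieldType) (w : C) g i : w ^+ 3 = 1 -> Fc w g i != 0.
Proof. by move=> w3; rewrite FcE Psi_nz. Qed.

Lemma Psi3 (C : fieldType) (w : C) x : w ^+ 3 = 1 -> Psi w x ^+ 3 = 1.
Proof. by move=> w3; rewrite PsiE exprAC w3 expr1n. Qed.

Lemma Psi_c0 (C : fieldType) (w : C) : Psi w c0 = w.
Proof. by rewrite PsiE et_c0 expr1. Qed.

Lemma memK g i : g \in ('Alt_('I_5))%g ->
  K5 ((sj z5 ((g^-1)%g i))^-1 * g * sj z5 i)%g.
Proof.
move=> gA.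
have [sA si] := sjP z5 i (isT : (4 <= 5)%N).
have [tA tj] := sjP z5 ((g^-1)%g i) (isT : (4 <= 5)%N).
move: (sj z5 ((g^-1)%g i)) tA tj => t tA tj.
move: (sj z5 i) sA si => s sA si.
apply/andP; split; first by rewrite !groupM ?groupV.
rewrite !permM.
have e : (t^-1)%g z5 = (g^-1)%g i by rewrite -tj permK.
by rewrite e permKV si eqxx.
Qed.

Lemma Fc_coc (C : fieldType) (w : C) g h i : w ^+ 3 = 1 ->
  g \in ('Alt_('I_5))%g -> h \in ('Alt_('I_5))%g ->
  Fc w (g * h)%g i = Fc w g ((h^-1)%g i) * Fc w h i.
Proof.
move=> w3 gA hA; rewrite !FcE -(Psi_hom w3 (memK ((h^-1)%g i) gA) (memK i hA)).
rewrite invMg permM; congr Psi.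
by rewrite !mulgA mulgK.
Qed.

Lemma Fc_K5 (C : fieldType) (w : C) h : K5 h -> Fc w h z5 = Psi w h.
Proof.
case/andP => hA /eqP hz; rewrite FcE.
have -> : (h^-1)%g z5 = z5 by rewrite -{1}hz permK.
by rewrite sjz invg1 mul1g mulg1.
Qed.

Lemma Dt_triv (C : fieldType) (w : C) g : w ^+ 3 = 1 -> g \in ('Alt_('I_5))%g ->
  \prod_i Fc w g i = 1.
Proof.
move=> w3 gA.
pose K := fun s : 'S_5 => s \in ('Alt_('I_5))%g.
have K1 : K 1%g by rewrite /K group1.
have KM : forall x y, K x -> K y -> K (x * y)%g by move=> x y; rewrite /K => *; rewrite groupM.
have KP : forall a b c d : 'I_5, true -> true -> true -> true -> a != b -> c != d ->
    K (tperm a b * tperm c d)%g.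
  by move=> a b c d _ _ _ _ ab cd; rewrite /K Alt_even odd_permM !odd_tperm ab cd.
pose chi := fun s => \prod_i Fc w s i.
have hM : forall x y, K x -> K y -> chi (x * y)%g = chi x * chi y.
  move=> x y Kx Ky; rewrite /chi.
  transitivity (\prod_i (Fc w x ((y^-1)%g i) * Fc w y i)).
    by apply: eq_bigr => i _; exact: (Fc_coc i w3 Kx Ky).
  have e : \prod_i Fc w x ((y^-1)%g i) = \prod_i Fc w x i.
    exact/esym/reindex_inj/perm_inj.
  by rewrite big_split /= e.
have hN : forall x, K x -> chi x != 0.
  by move=> x _; apply/prodf_neq0 => i _; apply: (Fc_nz _ _ w3).
have h3 : forall a b c : 'I_5, true -> true -> true -> a != b -> b != c -> a != c ->
    chi (tperm a b * tperm b c)%g = 1.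
  move=> a b c _ _ _ ab bc ac.
  have [d hd] := @fresh 5 [:: a; b; c] isT.
  have [e he] := @fresh 5 [:: a; b; c; d] isT.
  move: hd he; rewrite !inE !negb_or => /and3P [da db dc] /and4P [ea eb ec ed].
  have Kc : K (tperm a b * tperm b c)%g by apply: KP.
  have Ku : K (tperm a b * tperm d e)%g by apply: KP => //; rewrite eq_sym.
  exact: (cyc_triv ab bc ac da db dc ea eb ec KM hM hN Kc Ku).
have hfix : forall x, ~~ predT x -> g x = x by [].
by have [_ e] := @phi_trivial C 5 predT K chi K1 KM KP hM hN h3 g gA hfix; exact: e.
Qed.

Local Close Scope ring_scope.
Local Close Scope group_scope.

Local Open Scope ring_scope.

Lemma inX3_dg (C : numClosedFieldType) (A : 'M[C]_5) : inX3 A -> is_diag_mx A /\ A \in unitmx.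
Proof. by case=> [[a b _] _]. Qed.

Lemma inv_pow3 (C : fieldType) (x : C) k m : x ^+ 3 = 1 -> ((x ^+ k)^-1) ^+ (m * 3) = 1.
Proof.
move=> x3; rewrite exprM exprAC exprVn -exprM mulnC exprM x3 expr1n invr1 expr1n //.
Qed.

Lemma part1 (C : numClosedFieldType) : H1_cyclic_of_order (@inX3 C 5) 3.
Proof.
have [w [w3 w1 w2 we]] := omega_ex C.
have wk0 : forall k, w ^+ k != 0.
  move=> k; apply: expf_neq0; apply/eqP => w0; move: w3.
  by rewrite w0 expr0n /= => /eqP; rewrite eq_sym oner_eq0.
pose f := fun g : 'S_5 => dg (Fc w g).
have [c0A c0z] : c0 \in ('Alt_('I_5))%g /\ c0 z5 = z5.
  by have /andP [a /eqP b] := K5c0.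
have c0i : (c0^-1)%g z5 = z5 by rewrite -{1}c0z permK.
have Fc3 : forall g i, Fc w g i ^+ 3 = 1 by move=> g i; rewrite FcE Psi3.
exists f; split.
- split.
  + move=> g gA; split; last by rewrite /f dg_det (Dt_triv w3 gA).
    split; [exact: dg_diag | apply: dg_unit => i; exact: Fc_nz | exists 1%N].
    by rewrite /f dg_pow -dg1 expn1; apply: dg_ext => i; rewrite Fc3.
  + move=> g h gA hA; rewrite /f dg_act dg_mul; apply: dg_ext => i; exact: Fc_coc.
- move=> k /andP [k0 k3] [m [[mD mU _] _] hm].
  have mN := dg_unitP (eq_ind _ (fun M => M \in unitmx) mU _ (diag_dg mD)).
  have := hm c0 c0A.
  rewrite /f dg_pow (diag_dg mD) dg_inv // dg_act dg_mul.
  move/dg_eq/(_ z5); rewrite c0i mulVf // (Fc_K5 w K5c0) Psi_c0 => wk.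
  clear hm; move: k0 k3 wk; case: k => [|[|[|k]]] //.
  + by rewrite expr1 => _ _ /eqP; rewrite (negbTE w1).
  + by move=> _ _ /eqP; rewrite (negbTE w2).
- exists 1%:M.
    split; last by rewrite det1.
    split; [exact: scalar_mx_is_diag | exact: unitmx1 | exists 0%N].
    by rewrite expn0 /mxpow /= mulmx1.
  move=> g gA; rewrite /f dg_pow invmx1 act1 mulmx1 -dg1; apply: dg_ext => i; exact: Fc3.
move=> zc zcoc.
have [zD ZN ZC] := cocycle_dg (@inX3_dg C) zcoc.
have [zM _] := zcoc.
pose Z := fun g i => zc g i i.
have ZC' : forall g h, g \in ('Alt_('I_5))%g -> h \in ('Alt_('I_5))%g -> forall i,
    Z (g * h)%g i = Z g ((h^-1)%g i) * Z h i := ZC.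
have ZN' : forall g, g \in ('Alt_('I_5))%g -> forall i, Z g i != 0 := ZN.
have Z3 : forall g, g \in ('Alt_('I_5))%g -> exists a, forall i, Z g i ^+ (3 ^ a) = 1.
  move=> g gA; have [[_ _ [a ha]] _] := zM _ gA; exists a => i.
  by move: ha; rewrite zD // dg_pow -dg1 => /dg_eq ->.
have K5A : forall x, K5 x -> x \in ('Alt_('I_5))%g by move=> x /andP [].
have K5z : forall x, K5 x -> (x^-1)%g z5 = z5.
  by move=> x /andP [_ /eqP xz]; rewrite -{1}xz permK.
have hMz : forall x y, K5 x -> K5 y -> Z (x * y)%g z5 = Z x z5 * Z y z5.
  by move=> x y Kx Ky; rewrite ZC' ?K5A // K5z.
have hNz : forall x, K5 x -> Z x z5 != 0 by move=> x Kx; apply: ZN'; apply: K5A.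
have c0cube : Z c0 z5 ^+ 3 = 1.
  have o12 : o5 1 != o5 2 by apply: o5_neq.
  have o23 : o5 2 != o5 3 by apply: o5_neq.
  have o13 : o5 1 != o5 3 by apply: o5_neq.
  exact: (cyc_cube_chi o12 o23 o13 K5_1 K5M hMz hNz K5c0).
have [k k3 ek] := cube_roots w3 we c0cube.
exists k; split => //.
pose W := fun g i => Z g i * (Fc w g i ^+ k)^-1.
have WC : forall g h, g \in ('Alt_('I_5))%g -> h \in ('Alt_('I_5))%g -> forall i,
    W (g * h)%g i = W g ((h^-1)%g i) * W h i.
  move=> g h gA hA i; rewrite /W ZC' // (Fc_coc _ w3 gA hA) exprMn invfM.
  by rewrite mulrACA.
have WN : forall g, g \in ('Alt_('I_5))%g -> forall i, W g i != 0.
  by move=> g gA i; rewrite /W mulf_neq0 ?invr_eq0 ?expf_neq0 ?Fc_nz ?ZN'.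
have WH : forall h, h \in ('Alt_('I_5))%g -> h z5 = z5 -> W h z5 = 1.
  move=> h hA hz; have Kh : K5 h by rewrite /K5 hA hz eqxx.
  have hM : forall x y, K5 x -> K5 y -> W (x * y)%g z5 = W x z5 * W y z5.
    by move=> x y Kx Ky; rewrite WC ?K5A // K5z.
  have hN : forall x, K5 x -> W x z5 != 0 by move=> x Kx; apply: WN; apply: K5A.
  have h3 : forall x, K5 x -> exists a, W x z5 ^+ (3 ^ a) = 1.
    move=> x Kx; have [a ha] := Z3 _ (K5A _ Kx); exists a.+1.
    rewrite /W exprMn expnS mulnC inv_pow3 // mulr1 exprM ha expr1n //.
  have hc : W c0 z5 = 1.
    by rewrite /W (Fc_K5 w K5c0) Psi_c0 -ek (mulfV (hNz _ K5c0)).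
  exact: (P3 hM hN h3 hc Kh).
have sh := shapiro (isT : (4 <= 5)%N) WC WN WH.
set mm := fun j => W (sj z5 j) z5 in sh.
have mmN : forall j, mm j != 0.
  by move=> j; have [sA _] := sjP z5 j (isT : (4 <= 5)%N); apply: WN.
have [N hN] : exists N, forall j, mm j ^+ (3 ^ N) = 1.
  apply: (unif (P := fun j N => mm j ^+ (3 ^ N) = 1)).
    by move=> j a b ab; apply: pow_mono.
  move=> j; have [sA _] := sjP z5 j (isT : (4 <= 5)%N).
  have [a ha] := Z3 _ sA; exists a.+1.
  rewrite /mm /W exprMn expnS mulnC inv_pow3 // mulr1 exprM ha expr1n //.
set y := \prod_j mm j.
have yN : y ^+ (3 ^ N) = 1.
  by rewrite /y -prodrXl; apply: big1 => j _; apply: hN.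
have y0 : y != 0 by apply/prodf_neq0 => j _; apply: mmN.
have [a _ ha] := @Bezoutl (3 ^ N) 5 (expn_gt0 _ _).
have g1 : gcdn (3 ^ N) 5 = 1%N.
  by apply/eqP; rewrite -/(coprime _ _) coprimeXl.
rewrite g1 in ha.
set lam := y ^+ a.
have lam0 : lam != 0 by apply: expf_neq0.
have lam5 : lam ^+ 5 * y = 1.
  rewrite /lam -exprM -[X in _ * X]expr1 -exprD addnC.
  by case/dvdnP: ha => t ->; rewrite mulnC exprM yN expr1n.
pose M := dg (fun j => lam * mm j).
have lmN : forall j, lam * mm j != 0 by move=> j; rewrite mulf_neq0.
exists (fun g => invmx M *m mxact M g).
  exists M => //.
  split; last by rewrite dg_det big_split /= prodr_const card_ord lam5.
  split; [exact: dg_diag | exact: dg_unit | exists N].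
  rewrite dg_pow -dg1; apply: dg_ext => j.
  by rewrite exprMn hN mulr1 /lam exprAC yN expr1n.
move=> g gA; rewrite (zD g gA) /f dg_pow /M dg_inv // dg_act !dg_mul; apply: dg_ext => i.
rewrite invfM mulrACA mulVf // mul1r -sh //.
by rewrite /W mulrCA mulfV ?mulr1 ?expf_neq0 ?Fc_nz.
Qed.


Theorem lemma8p2 (C : numClosedFieldType) :
  H1_cyclic_of_order (@inX3 C 5) 3 /\
  (forall p q : nat, prime p -> (5 <= p)%N -> prime q -> (p, q) <> (5%N, 3%N) ->
     H1_trivial (@inDq C p q)).
Proof.
split; first exact: part1.
move=> p q pp p5 pq h; exact: part2.
Qed.
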